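(* Suppose choices follow the Luce choice model with true parameter $\theta^\star\in\Theta_b$, all (fixed) comparison sets $S_1,\dots,S_m$ have cardinality $k\ge2$, and $\lambda_2(L_M)>0$. Let $\widehat\theta\in\arg\max_{\theta\in\Theta_b}\ell(\theta)$. Then with probability at least $1-2/n$, $$\mathrm{MSE}(\widehat\theta,\theta^\star)\le D^2\,\frac{n(\log n+2)}{\lambda_2(L_M)^2}\,\frac1m,\qquad D=4k^2e^{4b}.$$
   Context: Items $N=\{1,\dots,n\}$; observations $(S_t,y_t)$, $t=1,\dots,m$, $y_t\in S_t\subseteq N$. Luce choice model: given the comparison sets, the choices are independent with $\Pr[y_t=i]=p_{i,S_t}(\theta^\star)$, where $p_{i,S}(\theta)=e^{\theta_i}/\sum_{v\in S}e^{\theta_v}$. Log-likelihood $\ell(\theta)=\sum_{t=1}^m\log p_{y_t,S_t}(\theta)$. $\Theta_b=\{\theta\in[-b,b]^n:\sum_i\theta_i=0\}$, $\mathrm{MSE}(\widehat\theta,\theta^\star)=\frac1n\|\widehat\theta-\theta^\star\|_2^2$. $M\in\mathbb R^{n\times n}$ has zero diagonal and off-diagonal entries $\frac nm\cdot\#\{t:\{i,j\}\subseteq S_t\}$. Laplacian $L_A=\mathrm{diag}(A\mathbf 1)-A$; $\lambda_2$ is the second smallest eigenvalue. *)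

(* Defs.v *)
From Stdlib Require Import Reals Lra List Arith ClassicalDescription.
Import ListNotations.
Open Scope R_scope.

(* Items are 0,...,n-1; observation times are 0,...,m-1. *)

Definition rsum (n : nat) (f : nat -> R) : R :=
  fold_right Rplus 0 (map f (seq 0 n)).

Definition lsum (s : list nat) (f : nat -> R) : R :=
  fold_right Rplus 0 (map f s).

Definition rprod (n : nat) (f : nat -> R) : R :=
  fold_right Rmult 1 (map f (seq 0 n)).

Definition luce_p (theta : nat -> R) (i : nat) (S : list nat) : R :=
  exp (theta i) / lsum S (fun v => exp (theta v)).

Definition in_Theta (n : nat) (b : R) (theta : nat -> R) : Prop :=
  (forall i, (i < n)%nat -> - b <= theta i <= b) /\ rsum n theta = 0.

(* An outcome is a list ys of length m with y_t = nth t ys 0. *)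
Definition obs (ys : list nat) (t : nat) : nat := nth t ys 0%nat.

Fixpoint outcomes (S : nat -> list nat) (m : nat) : list (list nat) :=
  match m with
  | O => [ [] ]
  | Datatypes.S t =>
      flat_map (fun ys => map (fun i => ys ++ [i]) (S t)) (outcomes S t)
  end.

Definition loglik (S : nat -> list nat) (m : nat) (ys : list nat)
  (theta : nat -> R) : R :=
  rsum m (fun t => ln (luce_p theta (obs ys t) (S t))).

Definition outcome_prob (S : nat -> list nat) (m : nat) (theta : nat -> R)
  (ys : list nat) : R :=
  rprod m (fun t => luce_p theta (obs ys t) (S t)).

Definition ind (P : Prop) : R :=
  if excluded_middle_informative P then 1 else 0.

Definition Prob (S : nat -> list nat) (m : nat) (theta : nat -> R)
  (E : list nat -> Prop) : R :=
  fold_right Rplus 0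
    (map (fun ys => outcome_prob S m theta ys * ind (E ys)) (outcomes S m)).

Definition MSE (n : nat) (a b : nat -> R) : R :=
  / INR n * rsum n (fun i => (a i - b i) ^ 2).

Definition cooc (S : nat -> list nat) (m i j : nat) : R :=
  rsum m (fun t =>
    if (existsb (Nat.eqb i) (S t) && existsb (Nat.eqb j) (S t))%bool
    then 1 else 0).

Definition Mmat (S : nat -> list nat) (n m : nat) (i j : nat) : R :=
  if Nat.eqb i j then 0 else INR n / INR m * cooc S m i j.

Definition laplacian (n : nat) (A : nat -> nat -> R) (i j : nat) : R :=
  (if Nat.eqb i j then rsum n (fun l => A i l) else 0) - A i j.

(* is_lambda2 n A l : l is the second smallest eigenvalue (with
   multiplicity) of the symmetric n x n matrix A, i.e. A has an orthonormal
   eigenbasis V_0,...,V_{n-1} with eigenvalues mu_0 <= ... <= mu_{n-1}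
   (spectral decomposition, which exists and whose sorted eigenvalue list is
   unique) and l = mu_1. *)
Definition is_lambda2 (n : nat) (A : nat -> nat -> R) (l : R) : Prop :=
  (2 <= n)%nat /\
  exists (mu : nat -> R) (V : nat -> nat -> R),
    (forall p q, (p < n)%nat -> (q < n)%nat ->
        rsum n (fun r => V p r * V q r) = if Nat.eqb p q then 1 else 0) /\
    (forall p r, (p < n)%nat -> (r < n)%nat ->
        rsum n (fun c => A r c * V p c) = mu p * V p r) /\
    (forall p q, (p <= q)%nat -> (q < n)%nat -> mu p <= mu q) /\
    l = mu 1%nat.

(* Main.v *)
Require Import Defs.
From Stdlib Require Import Reals Lra Lia List Bool ClassicalDescription.
From Coquelicot Require Import Coquelicot.
Import ListNotations.
Open Scope R_scope.

Lemma mvt_nonneg (f df : R -> R) (u : R) :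
  (forall x, is_derive f x (df x)) -> 0 <= u ->
  (forall x, 0 <= x <= u -> 0 <= df x) -> f 0 <= f u.
Proof.
  intros Hd Hu Hpos.
  destruct (MVT_gen f 0 u df) as [c [Hc Heq]].
  - intros x _. apply Hd.
  - intros x _. apply continuity_pt_filterlim. apply (ex_derive_continuous f x).
    exists (df x). apply Hd.
  - rewrite Rmin_left in Hc by lra. rewrite Rmax_right in Hc by lra.
    assert (0 <= df c * (u - 0)) by (apply Rmult_le_pos; [apply Hpos; lra| lra]).
    lra.
Qed.

Lemma taylor2_upper (h h1 h2 : R -> R) (K u : R) :
  (forall x, is_derive h x (h1 x)) -> (forall x, is_derive h1 x (h2 x)) ->
  h 0 = 0 -> h1 0 = 0 -> 0 <= u -> (forall x, 0 <= x <= u -> h2 x <= K) ->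
  h u <= K * u ^ 2 / 2.
Proof.
  intros D1 D2 H0 H10 Hu Hb.
  assert (P1 : forall x, 0 <= x <= u -> 0 <= K * x - h1 x).
  { intros x Hx.
    assert (E := mvt_nonneg (fun y => K * y - h1 y) (fun y => K - h2 y) x).
    simpl in E. rewrite H10 in E.
    assert (0 <= K * x - h1 x -> 0 <= K * x - h1 x) by auto.
    enough (K * 0 - 0 <= K * x - h1 x) by lra.
    apply E; [| lra |].
    - intros y. apply (is_derive_minus (fun y => K * y) h1 y K (h2 y)); [|apply D2].
      auto_derive; [auto| ring].
    - intros y Hy. specialize (Hb y ltac:(lra)). lra. }
  assert (E := mvt_nonneg (fun y => K * y ^ 2 / 2 - h y) (fun y => K * y - h1 y) u).
  simpl in E. rewrite H0 in E.
  enough (K * 0 ^ 2 / 2 - 0 <= K * u ^ 2 / 2 - h u) by (simpl in *; lra).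
  apply E; [| lra | apply P1].
  intros y. apply (is_derive_minus (fun y => K * y ^ 2 / 2) h y (K * y) (h1 y)); [|apply D1].
  auto_derive; [auto| ]. simpl. field.
Qed.

Lemma taylor2_lower (h h1 h2 : R -> R) (K u : R) :
  (forall x, is_derive h x (h1 x)) -> (forall x, is_derive h1 x (h2 x)) ->
  h 0 = 0 -> h1 0 = 0 -> 0 <= u -> (forall x, 0 <= x <= u -> K <= h2 x) ->
  K * u ^ 2 / 2 <= h u.
Proof.
  intros D1 D2 H0 H10 Hu Hb.
  assert (E := taylor2_upper (fun x => - h x) (fun x => - h1 x) (fun x => - h2 x) (-K) u).
  simpl in E.
  enough (- h u <= - K * u ^ 2 / 2) by lra.
  apply E; auto.
  - intros x. apply (is_derive_opp h x (h1 x)), D1.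
  - intros x. apply (is_derive_opp h1 x (h2 x)), D2.
  - rewrite H0; ring.
  - rewrite H10; ring.
  - intros x Hx. specialize (Hb x Hx). lra.
Qed.

Definition gsum {A} (l : list A) (f : A -> R) : R := fold_right Rplus 0 (map f l).

Lemma gsum_nil {A} (f : A -> R) : gsum nil f = 0. Proof. reflexivity. Qed.
Lemma gsum_cons {A} a l (f : A -> R) : gsum (a :: l) f = f a + gsum l f. Proof. reflexivity. Qed.
Lemma gsum_app {A} l1 l2 (f : A -> R) : gsum (l1 ++ l2) f = gsum l1 f + gsum l2 f.
Proof. induction l1; [rewrite app_nil_l, gsum_nil; ring|]. rewrite <- app_comm_cons, !gsum_cons, IHl1. ring. Qed.
Lemma gsum_ext {A} l (f g : A -> R) : (forall x, In x l -> f x = g x) -> gsum l f = gsum l g.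
Proof. induction l; intros H; [reflexivity|]. rewrite !gsum_cons. f_equal; [apply H; left; auto| apply IHl; intros; apply H; right; auto]. Qed.
Lemma gsum_le {A} l (f g : A -> R) : (forall x, In x l -> f x <= g x) -> gsum l f <= gsum l g.
Proof. induction l; intros H; [rewrite !gsum_nil; lra|]. rewrite !gsum_cons. apply Rplus_le_compat; [apply H; left; auto| apply IHl; intros; apply H; right; auto]. Qed.
Lemma gsum_plus {A} l (f g : A -> R) : gsum l (fun x => f x + g x) = gsum l f + gsum l g.
Proof. induction l; [rewrite !gsum_nil; ring|]. rewrite !gsum_cons, IHl. ring. Qed.
Lemma gsum_minus {A} l (f g : A -> R) : gsum l (fun x => f x - g x) = gsum l f - gsum l g.
Proof. induction l; [rewrite !gsum_nil; ring|]. rewrite !gsum_cons, IHl. ring. Qed.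
Lemma gsum_scal {A} l c (f : A -> R) : gsum l (fun x => c * f x) = c * gsum l f.
Proof. induction l; [rewrite !gsum_nil; ring|]. rewrite !gsum_cons, IHl. ring. Qed.
Lemma gsum_scalr {A} l c (f : A -> R) : gsum l (fun x => f x * c) = gsum l f * c.
Proof. induction l; [rewrite !gsum_nil; ring|]. rewrite !gsum_cons, IHl. ring. Qed.
Lemma gsum_const0 {A} l : gsum l (fun _ : A => 0) = 0.
Proof. induction l; [reflexivity|]. rewrite gsum_cons, IHl. ring. Qed.
Lemma gsum_nonneg {A} l (f : A -> R) : (forall x, In x l -> 0 <= f x) -> 0 <= gsum l f.
Proof. intros H. rewrite <- (gsum_const0 l). apply gsum_le; auto. Qed.
Lemma gsum_swap {A B} (l1 : list A) (l2 : list B) (f : A -> B -> R) :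
  gsum l1 (fun x => gsum l2 (fun y => f x y)) = gsum l2 (fun y => gsum l1 (fun x => f x y)).
Proof.
  induction l1; simpl.
  - symmetry. apply gsum_const0.
  - rewrite gsum_cons, IHl1, <- gsum_plus. reflexivity.
Qed.
Lemma gsum_flat_map {A B} (l : list A) (g : A -> list B) (f : B -> R) :
  gsum (flat_map g l) f = gsum l (fun x => gsum (g x) f).
Proof. induction l; [reflexivity|]. simpl. rewrite gsum_app, IHl. reflexivity. Qed.
Lemma gsum_map {A B} (l : list A) (g : A -> B) (f : B -> R) :
  gsum (map g l) f = gsum l (fun x => f (g x)).
Proof. induction l; [reflexivity|]. simpl. rewrite !gsum_cons, IHl. reflexivity. Qed.

Lemma exp_tangent x w : exp w * (1 + (x - w)) <= exp x.
Proof.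
  replace x with (w + (x - w)) at 2 by ring. rewrite exp_plus.
  apply Rmult_le_compat_l; [left; apply exp_pos| apply exp_ineq1_le].
Qed.

Lemma exp_chord A B z s : A < B -> A <= z <= B ->
  exp (s * z) <= ((B - z) * exp (s * A) + (z - A) * exp (s * B)) / (B - A).
Proof.
  intros HAB Hz.
  apply Rmult_le_reg_r with (B - A); [lra|].
  unfold Rdiv. rewrite Rmult_assoc, Rinv_l, Rmult_1_r by lra.
  pose proof (exp_tangent (s * A) (s * z)). pose proof (exp_tangent (s * B) (s * z)).
  assert (0 <= B - z) by lra. assert (0 <= z - A) by lra.
  apply Rmult_le_compat_l with (r := B - z) in H; auto.
  apply Rmult_le_compat_l with (r := z - A) in H0; auto.
  assert (E : (B - z) * (exp (s * z) * (1 + (s * A - s * z))) + (z - A) * (exp (s * z) * (1 + (s * B - s * z)))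
     = exp (s * z) * (B - A)) by ring.
  lra.
Qed.

Lemma hoeff_two (q u : R) : 0 <= q <= 1 -> 0 <= u ->
  exp (- q * u) * (1 - q + q * exp u) <= exp (u ^ 2 / 8).
Proof.
  intros Hq Hu.
  assert (Dpos : forall x, 0 < 1 - q + q * exp x).
  { intros x. pose proof (exp_pos x).
    destruct (Rle_lt_dec q (1/2)).
    - assert (0 <= q * exp x) by (apply Rmult_le_pos; lra). lra.
    - assert (0 < q * exp x) by (apply Rmult_lt_0_compat; lra). lra. }
  set (h := fun x => - q * x + ln (1 - q + q * exp x)).
  set (h1 := fun x => - q + q * exp x / (1 - q + q * exp x)).
  set (h2 := fun x => q * exp x * (1 - q) / (1 - q + q * exp x) ^ 2).
  assert (Hh : h u <= 1/4 * u ^ 2 / 2).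
  { apply (taylor2_upper h h1 h2); auto.
    - intros x. unfold h, h1. auto_derive.
      + specialize (Dpos x). lra.
      + field. specialize (Dpos x). lra.
    - intros x. unfold h1, h2. auto_derive.
      + specialize (Dpos x). lra.
      + field. specialize (Dpos x). lra.
    - unfold h. rewrite exp_0. replace (1 - q + q * 1) with 1 by ring. rewrite ln_1. ring.
    - unfold h1. rewrite exp_0. field. lra.
    - intros x _. unfold h2. specialize (Dpos x). pose proof (exp_pos x).
      apply Rmult_le_reg_r with ((1 - q + q * exp x) ^ 2); [apply pow_lt; lra|].
      unfold Rdiv. rewrite Rmult_assoc, Rinv_l, Rmult_1_r by (apply pow_nonzero; lra).
      assert (0 <= (q * exp x - (1 - q)) ^ 2) by apply pow2_ge_0.
      nra. }
  replace (exp (- q * u) * (1 - q + q * exp u)) with (exp (h u)).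
  - destruct Hh as [Hl|He].
    + left. apply exp_increasing. lra.
    + right. f_equal. lra.
  - unfold h. rewrite exp_plus, exp_ln by apply Dpos. reflexivity.
Qed.

Lemma hoeffding_list {T} (l : list T) (p Z : T -> R) (A B s : R) :
  (forall y, In y l -> 0 <= p y) -> gsum l p = 1 -> gsum l (fun y => p y * Z y) = 0 ->
  (forall y, In y l -> A <= Z y <= B) -> 0 <= s ->
  gsum l (fun y => p y * exp (s * Z y)) <= exp (s ^ 2 * (B - A) ^ 2 / 8).
Proof.
  intros Hp H1 H0 HZ Hs.
  assert (HA : A <= 0).
  { assert (gsum l (fun y => p y * A) <= gsum l (fun y => p y * Z y)).
    { apply gsum_le. intros y Hy. apply Rmult_le_compat_l; [auto| apply HZ; auto]. }
    rewrite gsum_scalr, H1 in H. lra. }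
  assert (HB : 0 <= B).
  { assert (gsum l (fun y => p y * Z y) <= gsum l (fun y => p y * B)).
    { apply gsum_le. intros y Hy. apply Rmult_le_compat_l; [auto| apply HZ; auto]. }
    rewrite gsum_scalr, H1 in H. lra. }
  destruct (Req_dec A B) as [E|NE].
  - subst B. assert (A = 0) by lra. subst A.
    rewrite (gsum_ext _ _ p).
    + rewrite H1. replace (s ^ 2 * (0 - 0) ^ 2 / 8) with 0 by (unfold Rdiv; ring). rewrite exp_0. lra.
    + intros y Hy. specialize (HZ y Hy). replace (Z y) with 0 by lra.
      rewrite Rmult_0_r, exp_0. ring.
  - assert (HAB : A < B) by lra.
    apply Rle_trans with (gsum l (fun y => p y * (((B - Z y) * exp (s * A) + (Z y - A) * exp (s * B)) / (B - A)))).
    { apply gsum_le. intros y Hy. apply Rmult_le_compat_l; [auto|]. apply exp_chord; auto. }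
    assert (E : forall y, p y * (((B - Z y) * exp (s * A) + (Z y - A) * exp (s * B)) / (B - A))
       = p y * ((B * exp (s * A) - A * exp (s * B)) / (B - A)) + (p y * Z y) * ((exp (s * B) - exp (s * A)) / (B - A))).
    { intros y. field. lra. }
    rewrite (gsum_ext _ _ _ (fun y _ => E y)), gsum_plus, gsum_scalr, gsum_scalr, H1, H0.
    set (q := - A / (B - A)). set (u := s * (B - A)).
    assert (Hq : 0 <= q <= 1).
    { unfold q. split.
      - unfold Rdiv. apply Rmult_le_pos; [lra| left; apply Rinv_0_lt_compat; lra].
      - apply Rmult_le_reg_r with (B - A); [lra|]. unfold Rdiv. rewrite Rmult_assoc, Rinv_l by lra. lra. }
    assert (Hu : 0 <= u) by (unfold u; apply Rmult_le_pos; lra).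
    pose proof (hoeff_two q u Hq Hu) as Hh.
    replace (s ^ 2 * (B - A) ^ 2 / 8) with (u ^ 2 / 8) by (unfold u, Rdiv; ring).
    replace (1 * ((B * exp (s * A) - A * exp (s * B)) / (B - A)) + 0 * ((exp (s * B) - exp (s * A)) / (B - A)))
      with (exp (- q * u) * (1 - q + q * exp u)); auto.
    unfold q, u.
    replace (- (- A / (B - A)) * (s * (B - A))) with (s * A) by (field; lra).
    replace (s * B) with (s * A + s * (B - A)) by ring. rewrite exp_plus.
    field. lra.
Qed.

Lemma is_derive_Rminus (f g : R -> R) x df dg : is_derive f x df -> is_derive g x dg -> is_derive (fun y => f y - g y) x (df - dg).
Proof. intros. exact (is_derive_minus f g x df dg H H0). Qed.
Lemma is_derive_Rplus (f g : R -> R) x df dg : is_derive f x df -> is_derive g x dg -> is_derive (fun y => f y + g y) x (df + dg).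
Proof. intros. exact (is_derive_plus f g x df dg H H0). Qed.
Lemma is_derive_lnc (f : R -> R) x df : is_derive f x df -> 0 < f x -> is_derive (fun y => ln (f y)) x (df / f x).
Proof. intros. pose proof (is_derive_comp ln f x (/ f x) df (is_derive_ln _ H0) H). 
  unfold scal in H1; simpl in H1; unfold mult in H1; simpl in H1. exact H1. Qed.
Lemma is_derive_Rconst x (c : R) : is_derive (fun _ => c) x 0.
Proof. auto_derive; auto. Qed.

Lemma exp_le_m x y : x <= y -> exp x <= exp y.
Proof. intros [H|H]; [left; apply exp_increasing; auto| right; subst; auto]. Qed.

Lemma is_derive_gsum {T} (l : list T) (F F' : T -> R -> R) x :
  (forall v, In v l -> is_derive (F v) x (F' v x)) ->
  is_derive (fun y => gsum l (fun v => F v y)) x (gsum l (fun v => F' v x)).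
Proof.
  induction l; intros H.
  - rewrite gsum_nil. apply (is_derive_ext (fun _ => 0)).
    + intros t. reflexivity.
    + auto_derive; auto.
  - rewrite gsum_cons. apply (is_derive_ext (fun y => F a y + gsum l (fun v => F v y))).
    + intros t. rewrite gsum_cons. reflexivity.
    + apply (is_derive_plus (F a) (fun y => gsum l (fun v => F v y))).
      * apply H. left; auto.
      * apply IHl. intros; apply H; right; auto.
Qed.

Lemma gsum_const {T} (l : list T) c : gsum l (fun _ => c) = INR (length l) * c.
Proof.
  induction l; [rewrite gsum_nil; simpl; ring|]. rewrite gsum_cons, IHl.
  simpl length. rewrite S_INR. ring.
Qed.

Lemma lagrange_id {T} (l : list T) (e D : T -> R) :
  gsum l (fun i => gsum l (fun j => e i * e j * (D i - D j) ^ 2)) =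
  2 * (gsum l (fun i => e i * D i ^ 2) * gsum l e - gsum l (fun i => e i * D i) ^ 2).
Proof.
  assert (E : forall i j, e i * e j * (D i - D j) ^ 2 =
     (e i * D i ^ 2) * e j + e i * (e j * D j ^ 2) - 2 * ((e i * D i) * (e j * D j))) by (intros; ring).
  rewrite (gsum_ext _ _ (fun i => (e i * D i ^ 2) * gsum l e + e i * gsum l (fun j => e j * D j ^ 2)
        - 2 * ((e i * D i) * gsum l (fun j => e j * D j)))).
  - rewrite gsum_minus, gsum_plus, gsum_scal.
    rewrite (gsum_scalr l (gsum l e) (fun i => e i * D i ^ 2)).
    rewrite (gsum_scalr l (gsum l (fun j => e j * D j ^ 2)) e).
    rewrite (gsum_scalr l (gsum l (fun j => e j * D j)) (fun i => e i * D i)). ring.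
  - intros i _. rewrite (gsum_ext _ _ _ (fun j _ => E i j)).
    rewrite gsum_minus, gsum_plus, gsum_scal, gsum_scal, gsum_scal, gsum_scal. ring.
Qed.

Definition Qf (l : list nat) (D : nat -> R) : R :=
  / 2 * gsum l (fun i => gsum l (fun j => (D i - D j) ^ 2)).

Lemma lse_strong (l : list nat) (th D : nat -> R) (bb : R) (k : nat) :
  l <> nil -> length l = k ->
  (forall v, In v l -> - bb <= th v <= bb /\ - bb <= th v + D v <= bb) ->
  ln (gsum l (fun v => exp (th v))) + gsum l (fun v => exp (th v) * D v) / gsum l (fun v => exp (th v))
   + exp (- (4 * bb)) / INR k ^ 2 * Qf l D / 2
  <= ln (gsum l (fun v => exp (th v + D v))).
Proof.
  intros Hne Hlen Hb.
  set (Sg := fun s => gsum l (fun v => exp (th v + s * D v))).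
  set (S1 := fun s => gsum l (fun v => D v * exp (th v + s * D v))).
  set (S2 := fun s => gsum l (fun v => D v ^ 2 * exp (th v + s * D v))).
  assert (Spos : forall s, 0 < Sg s).
  { intros s. unfold Sg. destruct l as [|a l']; [congruence|].
    rewrite gsum_cons. pose proof (exp_pos (th a + s * D a)).
    assert (0 <= gsum l' (fun v => exp (th v + s * D v))) by (apply gsum_nonneg; intros; left; apply exp_pos).
    lra. }
  assert (dSg : forall x, is_derive Sg x (S1 x)).
  { intros x. unfold Sg, S1. apply (is_derive_gsum l (fun v s => exp (th v + s * D v)) (fun v s => D v * exp (th v + s * D v))).
    intros v _. auto_derive; auto. ring. }
  assert (dS1 : forall x, is_derive S1 x (S2 x)).
  { intros x. unfold S1, S2. apply (is_derive_gsum l (fun v s => D v * exp (th v + s * D v)) (fun v s => D v ^ 2 * exp (th v + s * D v))).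
    intros v _. auto_derive; auto. ring. }
  set (c0 := S1 0 / Sg 0).
  set (h := fun s => ln (Sg s) - ln (Sg 0) - s * c0).
  set (h1 := fun s => S1 s / Sg s - c0).
  set (h2 := fun s => (S2 s * Sg s - S1 s ^ 2) / Sg s ^ 2).
  set (K := exp (- (4 * bb)) / INR k ^ 2 * Qf l D).
  assert (Hk : (0 < k)%nat) by (destruct l; [congruence| simpl in Hlen; lia]).
  assert (HkR : 0 < INR k) by (apply lt_0_INR; auto).
  assert (Main : K * 1 ^ 2 / 2 <= h 1).
  { apply (taylor2_lower h h1 h2 K 1).
    - intros x. unfold h, h1.
      apply is_derive_Rminus.
      + rewrite <- (Rminus_0_r (S1 x / Sg x)).
        apply (is_derive_Rminus (fun s => ln (Sg s)) (fun _ => ln (Sg 0)) x (S1 x / Sg x) 0).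
        * apply is_derive_lnc; auto.
        * apply is_derive_Rconst.
      + auto_derive; auto. ring.
    - intros x. unfold h1, h2.
      replace ((S2 x * Sg x - S1 x ^ 2) / Sg x ^ 2) with ((S2 x * Sg x - S1 x * S1 x) / Sg x ^ 2 - 0) by (simpl; unfold Rdiv; ring).
      apply is_derive_Rminus; [|apply is_derive_Rconst].
      apply is_derive_div; auto. specialize (Spos x). lra.
    - unfold h. ring.
    - unfold h1, c0. ring.
    - lra.
    - intros x Hx. unfold h2, K.
      set (e := fun v => exp (th v + x * D v)).
      set (Kc := exp (- (4 * bb)) / INR k ^ 2).
      assert (HS2 : S2 x = gsum l (fun i => e i * D i ^ 2)) by (unfold S2; apply gsum_ext; intros; unfold e; ring).
      assert (HS1 : S1 x = gsum l (fun i => e i * D i)) by (unfold S1; apply gsum_ext; intros; unfold e; ring).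
      assert (HSg : Sg x = gsum l e) by reflexivity.
      assert (Lg := lagrange_id l e D).
      rewrite <- HS2, <- HS1, <- HSg in Lg.
      set (ai := exp (- bb)). set (a := exp bb).
      assert (Haai : a * ai = 1) by (unfold a, ai; rewrite <- exp_plus; replace (bb + - bb) with 0 by ring; apply exp_0).
      assert (H4 : exp (- (4 * bb)) = ai ^ 4) by (unfold ai; replace (- (4 * bb)) with (- bb + - bb + - bb + - bb) by ring; rewrite !exp_plus; ring).
      assert (Hai : 0 < ai) by apply exp_pos.
      assert (Hei : forall i, In i l -> ai <= e i).
      { intros i Hi. destruct (Hb i Hi) as [B1 B2]. unfold e, ai.
        apply exp_le_m. nra. }
      assert (HSgle : Sg x <= INR k * a).
      { rewrite HSg, <- Hlen, <- gsum_const. apply gsum_le. intros i Hi.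
        destruct (Hb i Hi) as [B1 B2]. unfold e, a.
        apply exp_le_m. nra. }
      assert (HSp := Spos x).
      assert (HKc : 0 <= Kc) by (unfold Kc; apply Rmult_le_pos; [left; apply exp_pos| left; apply Rinv_0_lt_compat, pow_lt; auto]).
      assert (Hpair : forall i j, In i l -> In j l -> Kc <= e i * e j / Sg x ^ 2).
      { intros i j Hi Hj.
        apply Rmult_le_reg_r with (Sg x ^ 2); [apply pow_lt; auto|].
        unfold Rdiv. rewrite Rmult_assoc, Rinv_l, Rmult_1_r by (apply pow_nonzero; lra).
        apply Rle_trans with (Kc * (INR k * a) ^ 2).
        - apply Rmult_le_compat_l; auto. apply pow_incr; lra.
        - unfold Kc. rewrite H4.
          replace (ai ^ 4 / INR k ^ 2 * (INR k * a) ^ 2) with (ai * ai * (a * ai) ^ 2) by (field; lra).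
          rewrite Haai. pose proof (Hei i Hi). pose proof (Hei j Hj). nra. }
      unfold Qf.
      replace ((S2 x * Sg x - S1 x ^ 2) / Sg x ^ 2) with
        (/ 2 * gsum l (fun i => gsum l (fun j => e i * e j / Sg x ^ 2 * (D i - D j) ^ 2))).
      + apply Rle_trans with (/ 2 * gsum l (fun i => gsum l (fun j => Kc * (D i - D j) ^ 2))).
        * right. rewrite (gsum_ext l (fun i => gsum l (fun j => Kc * (D i - D j) ^ 2)) (fun i => Kc * gsum l (fun j => (D i - D j) ^ 2))).
          -- rewrite gsum_scal. ring.
          -- intros i _. rewrite gsum_scal. reflexivity.
        * apply Rmult_le_compat_l; [lra|].
          apply gsum_le. intros i Hi. apply gsum_le. intros j Hj.
          specialize (Hpair i j Hi Hj). assert (0 <= (D i - D j) ^ 2) by apply pow2_ge_0. nra.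
      + rewrite (gsum_ext _ _ (fun i => / Sg x ^ 2 * gsum l (fun j => e i * e j * (D i - D j) ^ 2))).
        * rewrite gsum_scal, Lg. field. lra.
        * intros i _. rewrite <- gsum_scal. apply gsum_ext. intros j _. unfold Rdiv. ring. }
  unfold h, c0, Sg, S1 in Main.
  rewrite (gsum_ext l (fun v => exp (th v + 1 * D v)) (fun v => exp (th v + D v))) in Main
    by (intros; rewrite Rmult_1_l; reflexivity).
  rewrite (gsum_ext l (fun v => exp (th v + 0 * D v)) (fun v => exp (th v))) in Main
    by (intros; rewrite Rmult_0_l, Rplus_0_r; reflexivity).
  rewrite (gsum_ext l (fun v => D v * exp (th v + 0 * D v)) (fun v => exp (th v) * D v)) in Main
    by (intros; rewrite Rmult_0_l, Rplus_0_r; ring).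
  replace (K * 1 ^ 2 / 2) with (K / 2) in Main by (unfold Rdiv; ring). lra.
Qed.

Lemma rsum_gsum n f : rsum n f = gsum (seq 0 n) f. Proof. reflexivity. Qed.
Lemma lsum_gsum l f : lsum l f = gsum l f. Proof. reflexivity. Qed.

Lemma rsum_ext n f g : (forall i, (i < n)%nat -> f i = g i) -> rsum n f = rsum n g.
Proof. intros H. rewrite !rsum_gsum. apply gsum_ext. intros i Hi. apply in_seq in Hi. apply H. lia. Qed.
Lemma rsum_le n f g : (forall i, (i < n)%nat -> f i <= g i) -> rsum n f <= rsum n g.
Proof. intros H. rewrite !rsum_gsum. apply gsum_le. intros i Hi. apply in_seq in Hi. apply H. lia. Qed.
Lemma rsum_plus n f g : rsum n (fun i => f i + g i) = rsum n f + rsum n g.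
Proof. apply gsum_plus. Qed.
Lemma rsum_minus n f g : rsum n (fun i => f i - g i) = rsum n f - rsum n g.
Proof. apply gsum_minus. Qed.
Lemma rsum_scal n c f : rsum n (fun i => c * f i) = c * rsum n f.
Proof. apply gsum_scal. Qed.
Lemma rsum_scalr n c f : rsum n (fun i => f i * c) = rsum n f * c.
Proof. apply gsum_scalr. Qed.
Lemma rsum_swap n m f : rsum n (fun i => rsum m (fun j => f i j)) = rsum m (fun j => rsum n (fun i => f i j)).
Proof. apply gsum_swap. Qed.
Lemma rsum_zero n : rsum n (fun _ => 0) = 0.
Proof. apply gsum_const0. Qed.
Lemma rsum_nonneg n f : (forall i, (i < n)%nat -> 0 <= f i) -> 0 <= rsum n f.
Proof. intros H. rewrite <- (rsum_zero n). apply rsum_le. auto. Qed.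
Lemma rsum_S n f : rsum (S n) f = rsum n f + f n.
Proof. rewrite !rsum_gsum, seq_S, gsum_app, gsum_cons, gsum_nil, Nat.add_0_l. ring. Qed.
Lemma rsum_O f : rsum 0 f = 0. Proof. reflexivity. Qed.

Lemma rsum_ind n y f : (y < n)%nat -> rsum n (fun i => if Nat.eqb i y then f i else 0) = f y.
Proof.
  induction n; intros Hy; [lia|].
  rewrite rsum_S. destruct (Nat.eq_dec y n) as [->|Hne].
  - rewrite Nat.eqb_refl. rewrite (rsum_ext _ _ (fun _ => 0)), rsum_zero; [ring|].
    intros i Hi. destruct (Nat.eqb_spec i n); [lia|auto].
  - rewrite IHn by lia. destruct (Nat.eqb_spec n y); [lia|ring].
Qed.

Definition inS (l : list nat) (i : nat) : bool := existsb (Nat.eqb i) l.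

Lemma inS_iff l i : inS l i = true <-> In i l.
Proof.
  unfold inS. rewrite existsb_exists. split.
  - intros [x [Hx E]]. apply Nat.eqb_eq in E. subst; auto.
  - intros H. exists i. split; auto. apply Nat.eqb_refl.
Qed.

Lemma inS_false l i : ~ In i l -> inS l i = false.
Proof. intros H. destruct (inS l i) eqn:E; auto. apply inS_iff in E. contradiction. Qed.

Lemma rsum_inS n l f : NoDup l -> (forall i, In i l -> (i < n)%nat) ->
  rsum n (fun i => if inS l i then f i else 0) = gsum l f.
Proof.
  induction l as [|a l IH]; intros Hnd Hin.
  - rewrite gsum_nil. apply rsum_zero.
  - inversion Hnd as [|? ? Hna Hnd']; subst.
    rewrite gsum_cons, <- IH by (auto; intros; apply Hin; right; auto).
    rewrite <- (rsum_ind n a f) by (apply Hin; left; auto).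
    rewrite <- rsum_plus. apply rsum_ext. intros i _.
    unfold inS. simpl. fold (inS l i).
    destruct (Nat.eqb_spec i a) as [->|Hne]; simpl.
    + rewrite inS_false by auto. ring.
    + ring.
Qed.

Definition nsq (n : nat) (v : nat -> R) : R := rsum n (fun i => v i ^ 2).
Definition quad (n : nat) (L : nat -> nat -> R) (x : nat -> R) : R :=
  rsum n (fun r => x r * rsum n (fun c => L r c * x c)).


Module MC.
From mathcomp Require Import all_boot all_algebra.
From mathcomp Require Import Rstruct.
Local Open Scope ring_scope.
Import GRing.Theory.

Lemma rsum_big n (f : nat -> R) : rsum n f = \sum_(i < n) f i.
Proof.
  elim: n => [|n IH]; first by rewrite big_ord0.
  by rewrite rsum_S big_ord_recr /= IH.
Qed.

Lemma orth_complete (n : nat) (V : nat -> nat -> R) :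
 (forall p q, (p < n)%coq_nat -> (q < n)%coq_nat ->
    rsum n (fun r => V p r * V q r) = if Nat.eqb p q then 1 else 0) ->
 forall r c, (r < n)%coq_nat -> (c < n)%coq_nat ->
    rsum n (fun p => V p r * V p c) = if Nat.eqb r c then 1 else 0.
Proof.
  move=> H r c Hr Hc.
  pose A := \matrix_(i < n, j < n) V i j.
  have HA : A *m A^T = 1%:M.
    apply/matrixP => i j; rewrite !mxE.
    rewrite (eq_bigr (fun l : 'I_n => V i l * V j l)); last by move=> l _; rewrite !mxE.
    rewrite -(rsum_big n (fun l => V i l * V j l)) H; try exact: (ltP (ltn_ord _)).
    case: (Nat.eqb_spec i j) => E; case: eqP => // E'.
    - by case: E'; apply: val_inj.
    - by rewrite E' in E.
  have HB := mulmx1C HA.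
  pose r' := Ordinal (introT ltP Hr). pose c' := Ordinal (introT ltP Hc).
  have E : (A^T *m A) r' c' = (1%:M : 'M[R]_n) r' c' by rewrite HB.
  move: E; rewrite !mxE.
  rewrite (eq_bigr (fun l : 'I_n => V l r * V l c)); last by move=> l _; rewrite !mxE.
  rewrite -(rsum_big n (fun l => V l r * V l c)) => ->.
  case: (Nat.eqb_spec r c) => E1; case: eqP => // E2.
  - by case: E2; apply: val_inj.
  - by case: E2 => /= E3; rewrite E3 in E1.
Qed.
End MC.
Check MC.orth_complete.
Lemma orth_complete (n : nat) (V : nat -> nat -> R) :
 (forall p q, (p < n)%nat -> (q < n)%nat ->
    rsum n (fun r => V p r * V q r) = if Nat.eqb p q then 1 else 0) ->
 forall r c, (r < n)%nat -> (c < n)%nat ->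
    rsum n (fun p => V p r * V p c) = if Nat.eqb r c then 1 else 0.
Proof. exact (@MC.orth_complete n V). Qed.

Import Defs.
Lemma spectral (n : nat) (L : nat -> nat -> R) (l2 : R) (x : nat -> R) :
  is_lambda2 n L l2 -> 0 < l2 ->
  (forall c, (c < n)%nat -> rsum n (fun r => L r c) = 0) -> rsum n x = 0 ->
  l2 * nsq n x <= quad n L x.
Proof.
  intros [Hn [mu [V [Horth [Heig [Hmono Hl2]]]]]] Hpos Hcol Hx.
  pose proof (orth_complete n V Horth) as Hcomp.
  assert (Hexp : forall y r, (r < n)%nat ->
     y r = rsum n (fun p => rsum n (fun r' => y r' * V p r') * V p r)).
  { intros y r Hr.
    rewrite (rsum_ext n _ (fun p => rsum n (fun r' => y r' * (V p r' * V p r)))).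
    2:{ intros p _. rewrite <- rsum_scalr. apply rsum_ext. intros; ring. }
    rewrite rsum_swap.
    rewrite (rsum_ext n _ (fun r' => if Nat.eqb r' r then y r' else 0)).
    - rewrite rsum_ind; auto.
    - intros r' Hr'. rewrite rsum_scal, Hcomp by auto. destruct (Nat.eqb r' r); ring. }
  set (c := fun p => rsum n (fun r => x r * V p r)).
  set (d := fun p => rsum n (fun r => V p r)).
  assert (Hip : forall y z, rsum n (fun r => y r * z r) =
     rsum n (fun p => rsum n (fun r => y r * V p r) * rsum n (fun r => z r * V p r))).
  { intros y z.
    rewrite (rsum_ext n (fun r => y r * z r) (fun r => y r * rsum n (fun p => rsum n (fun r' => z r' * V p r') * V p r))).
    2:{ intros r Hr. rewrite <- Hexp; auto. }
    rewrite (rsum_ext n (fun r => y r * _) (fun r => rsum n (fun p => rsum n (fun r' => z r' * V p r') * (y r * V p r)))).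
    2:{ intros r Hr. rewrite <- rsum_scal. apply rsum_ext. intros; ring. }
    rewrite rsum_swap. apply rsum_ext. intros p _. rewrite rsum_scal. ring. }
  assert (Hd : forall p, (p < n)%nat -> mu p * d p = 0).
  { intros p Hp. unfold d. rewrite <- rsum_scal.
    rewrite (rsum_ext n _ (fun r => rsum n (fun c0 => L r c0 * V p c0))).
    2:{ intros r Hr. rewrite Heig; auto. }
    rewrite rsum_swap. rewrite (rsum_ext n _ (fun _ => 0)); [apply rsum_zero|].
    intros c0 Hc0. rewrite rsum_scalr, Hcol; auto. ring. }
  assert (Hd1 : forall p, (1 <= p < n)%nat -> d p = 0).
  { intros p Hp. specialize (Hd p ltac:(lia)). specialize (Hmono 1%nat p ltac:(lia) ltac:(lia)).
    subst l2. apply Rmult_integral in Hd. destruct Hd; [lra|auto]. }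
  assert (Hsx : rsum n (fun r => x r * 1) = c 0%nat * d 0%nat).
  { rewrite Hip. rewrite (rsum_ext n _ (fun p => if Nat.eqb p 0 then c p * d p else 0)).
    - rewrite rsum_ind by lia. reflexivity.
    - intros p Hp. unfold c, d. destruct (Nat.eqb_spec p 0) as [->|Hne].
      + apply f_equal. apply rsum_ext. intros; ring.
      + rewrite (rsum_ext n (fun r => 1 * V p r) (fun r => V p r)) by (intros; ring).
        fold (d p). rewrite Hd1 by lia. ring. }
  assert (H11 : rsum n (fun r => 1 * 1) = d 0%nat * d 0%nat).
  { rewrite Hip. rewrite (rsum_ext n _ (fun p => if Nat.eqb p 0 then d p * d p else 0)).
    - rewrite rsum_ind by lia. reflexivity.
    - intros p Hp. 
      rewrite (rsum_ext n (fun r => 1 * V p r) (fun r => V p r)) by (intros; ring).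
      fold (d p). destruct (Nat.eqb_spec p 0) as [->|Hne]; [reflexivity|].
      rewrite Hd1 by lia. ring. }
  assert (Hn1 : rsum n (fun r => 1 * 1) = INR n).
  { clear - n. induction n; [reflexivity|]. rewrite rsum_S, IHn, S_INR. ring. }
  assert (Hd0 : d 0%nat <> 0).
  { intros E. rewrite Hn1, E in H11. assert (INR 2 <= INR n) by (apply le_INR; lia). simpl in H. lra. }
  assert (Hc0 : c 0%nat = 0).
  { rewrite (rsum_ext n (fun r => x r * 1) x) in Hsx by (intros; ring).
    rewrite Hx in Hsx. symmetry in Hsx. apply Rmult_integral in Hsx. destruct Hsx; [auto|contradiction]. }
  assert (Hq : quad n L x = rsum n (fun p => mu p * c p ^ 2)).
  { unfold quad.
    rewrite (rsum_ext n (fun r => x r * rsum n (fun c0 => L r c0 * x c0)) (fun r => x r * rsum n (fun p => c p * mu p * V p r))).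
    2:{ intros r Hr. f_equal.
        rewrite (rsum_ext n (fun c0 => L r c0 * x c0) (fun c0 => rsum n (fun p => c p * (L r c0 * V p c0)))).
        2:{ intros c0 Hc0'. rewrite (Hexp x c0 Hc0') at 1. rewrite <- rsum_scal.
            apply rsum_ext. intros; unfold c; ring. }
        rewrite rsum_swap. apply rsum_ext. intros p Hp. rewrite rsum_scal, Heig by auto. ring. }
    rewrite (rsum_ext n (fun r => x r * _) (fun r => rsum n (fun p => c p * mu p * (x r * V p r)))).
    2:{ intros r Hr. rewrite <- rsum_scal. apply rsum_ext. intros; ring. }
    rewrite rsum_swap. apply rsum_ext. intros p Hp. rewrite rsum_scal. fold (c p). ring. }
  assert (Hnx : nsq n x = rsum n (fun p => c p ^ 2)).
  { unfold nsq. rewrite (rsum_ext n (fun i => x i ^ 2) (fun r => x r * x r)) by (intros; ring).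
    rewrite Hip. apply rsum_ext. intros; unfold c; ring. }
  rewrite Hq, Hnx, <- rsum_scal. apply rsum_le. intros p Hp.
  destruct (Nat.eqb_spec p 0) as [->|Hne].
  - rewrite Hc0. lra.
  - assert (l2 <= mu p) by (subst l2; apply Hmono; lia).
    assert (0 <= c p ^ 2) by apply pow2_ge_0. nra.
Qed.

Definition Ex (S : nat -> list nat) (m : nat) (th : nat -> R) (F : list nat -> R) : R :=
  gsum (outcomes S m) (fun ys => outcome_prob S m th ys * F ys).

Lemma Prob_Ex S m th E : Prob S m th E = Ex S m th (fun ys => ind (E ys)).
Proof. reflexivity. Qed.

Lemma outcomes_len S m ys : In ys (outcomes S m) -> length ys = m.
Proof.
  revert ys. induction m; simpl; intros ys H.
  - destruct H as [<-|[]]. reflexivity.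
  - apply in_flat_map in H. destruct H as [zs [Hz Hy]]. apply in_map_iff in Hy.
    destruct Hy as [i [<- _]]. rewrite length_app, (IHm zs Hz). simpl. lia.
Qed.

Lemma outcomes_in S m ys t : In ys (outcomes S m) -> (t < m)%nat -> In (obs ys t) (S t).
Proof.
  revert ys. induction m; simpl; intros ys H Ht; [lia|].
  apply in_flat_map in H. destruct H as [zs [Hz Hy]]. apply in_map_iff in Hy.
  destruct Hy as [i [<- Hi]]. pose proof (outcomes_len S m zs Hz) as Hl.
  unfold obs. destruct (Nat.eq_dec t m) as [->|Hne].
  - rewrite app_nth2 by lia. rewrite Hl, Nat.sub_diag. exact Hi.
  - rewrite app_nth1 by lia. apply IHm; auto. lia.
Qed.

Lemma obs_snoc ys i t : (t < length ys)%nat -> obs (ys ++ [i]) t = obs ys t.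
Proof. intros H. unfold obs. rewrite app_nth1; auto. Qed.
Lemma obs_last ys i : obs (ys ++ [i]) (length ys) = i.
Proof. unfold obs. rewrite app_nth2, Nat.sub_diag by lia. reflexivity. Qed.

Lemma rprod_S m f : rprod (S m) f = rprod m f * f m.
Proof.
  unfold rprod. rewrite seq_S, map_app, fold_right_app, Nat.add_0_l. simpl.
  generalize (f m). induction (map f (seq 0 m)); intros; simpl; [ring|].
  rewrite IHl. ring.
Qed.
Lemma rprod_ext m f g : (forall t, (t < m)%nat -> f t = g t) -> rprod m f = rprod m g.
Proof.
  induction m; intros H; [reflexivity|]. rewrite !rprod_S. rewrite IHm by (intros; apply H; lia). rewrite H by lia. reflexivity.
Qed.
Lemma rprod_nonneg m f : (forall t, (t < m)%nat -> 0 <= f t) -> 0 <= rprod m f.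
Proof.
  induction m; intros H; [unfold rprod; simpl; lra|]. rewrite rprod_S. apply Rmult_le_pos; auto.
Qed.

Lemma Rinv_nonneg x : 0 <= x -> 0 <= / x.
Proof. intros [H|H]; [left; apply Rinv_0_lt_compat; auto| subst; rewrite Rinv_0; lra]. Qed.

Lemma luce_nonneg th i l : 0 <= luce_p th i l.
Proof.
  unfold luce_p, Rdiv. apply Rmult_le_pos; [left; apply exp_pos|].
  apply Rinv_nonneg. rewrite lsum_gsum. apply gsum_nonneg. intros; left; apply exp_pos.
Qed.

Lemma lsum_exp_pos th l : l <> nil -> 0 < lsum l (fun v => exp (th v)).
Proof.
  intros H. destruct l as [|a l]; [congruence|]. rewrite lsum_gsum, gsum_cons.
  pose proof (exp_pos (th a)).
  assert (0 <= gsum l (fun v => exp (th v))) by (apply gsum_nonneg; intros; left; apply exp_pos). lra.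
Qed.

Lemma luce_sum th l : l <> nil -> gsum l (fun i => luce_p th i l) = 1.
Proof.
  intros H. unfold luce_p, Rdiv. rewrite (gsum_scalr l (/ lsum l (fun v => exp (th v))) (fun i => exp (th i))).
  rewrite <- lsum_gsum. field. pose proof (lsum_exp_pos th l H). lra.
Qed.

Lemma oprob_nonneg S m th ys : 0 <= outcome_prob S m th ys.
Proof. apply rprod_nonneg. intros; apply luce_nonneg. Qed.

Lemma oprob_snoc S m th ys i : length ys = m ->
  outcome_prob S (Datatypes.S m) th (ys ++ [i]) = outcome_prob S m th ys * luce_p th i (S m).
Proof.
  intros Hl. unfold outcome_prob. rewrite rprod_S. f_equal.
  - apply rprod_ext. intros t Ht. rewrite obs_snoc by lia. reflexivity.
  - rewrite <- Hl, obs_last. reflexivity.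
Qed.

Lemma Ex_S S m th F :
  Ex S (Datatypes.S m) th F = Ex S m th (fun ys => gsum (S m) (fun i => luce_p th i (S m) * F (ys ++ [i]))).
Proof.
  unfold Ex. simpl outcomes. rewrite gsum_flat_map. apply gsum_ext. intros ys Hys.
  rewrite gsum_map, <- gsum_scal. apply gsum_ext. intros i _.
  rewrite oprob_snoc by (apply outcomes_len with S; auto). ring.
Qed.

Lemma Ex_le S m th F G : (forall ys, In ys (outcomes S m) -> F ys <= G ys) -> Ex S m th F <= Ex S m th G.
Proof.
  intros H. apply gsum_le. intros ys Hys. apply Rmult_le_compat_l; [apply oprob_nonneg| auto].
Qed.
Lemma Ex_minus S m th F G : Ex S m th (fun ys => F ys - G ys) = Ex S m th F - Ex S m th G.
Proof. unfold Ex. rewrite <- gsum_minus. apply gsum_ext. intros; ring. Qed.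
Lemma Ex_scal S m th c F : Ex S m th (fun ys => c * F ys) = c * Ex S m th F.
Proof. unfold Ex. rewrite <- gsum_scal. apply gsum_ext. intros; ring. Qed.

Lemma Ex_one S m th : (forall t, (t < m)%nat -> S t <> nil) -> Ex S m th (fun _ => 1) = 1.
Proof.
  induction m; intros H.
  - unfold Ex. simpl outcomes. rewrite gsum_cons, gsum_nil. unfold outcome_prob, rprod. simpl. ring.
  - rewrite Ex_S. transitivity (Ex S m th (fun _ => 1)); [|apply IHm; intros; apply H; lia].
    apply gsum_ext. intros ys _. f_equal.
    rewrite (gsum_ext _ _ (fun i => luce_p th i (S m))) by (intros; ring).
    apply luce_sum. apply H. lia.
Qed.

Definition Xv (th : nat -> R) (l : list nat) (y : nat) (i : nat) : R :=
  (if Nat.eqb i y then 1 else 0) - (if inS l i then luce_p th i l else 0).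

Lemma list_argmax (l : list nat) (a : nat -> R) : l <> nil ->
  exists i, In i l /\ forall y, In y l -> a y <= a i.
Proof.
  induction l as [|x l IH]; intros H; [congruence|].
  destruct l as [|z l'].
  - exists x. split; [left; auto|]. intros y [<-|[]]. lra.
  - destruct IH as [i [Hi Hmax]]; [congruence|].
    destruct (Rle_dec (a x) (a i)).
    + exists i. split; [right; auto|]. intros y [<-|Hy]; auto.
    + exists x. split; [left; auto|]. intros y [<-|Hy]; [lra|]. specialize (Hmax y Hy). lra.
Qed.

Lemma list_argmin (l : list nat) (a : nat -> R) : l <> nil ->
  exists i, In i l /\ forall y, In y l -> a i <= a y.
Proof.
  intros H. destruct (list_argmax l (fun v => - a v) H) as [i [Hi Hm]].
  exists i. split; auto. intros y Hy. specialize (Hm y Hy). lra.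
Qed.

Lemma nsq_nonneg n a : 0 <= nsq n a.
Proof. apply rsum_nonneg. intros; apply pow2_ge_0. Qed.

Lemma pair_bound n (a : nat -> R) i j : (i < n)%nat -> (j < n)%nat ->
  (a i - a j) ^ 2 <= 2 * nsq n a.
Proof.
  intros Hi Hj. destruct (Nat.eq_dec i j) as [->|Hne].
  - pose proof (nsq_nonneg n a). replace (a j - a j) with 0 by ring. lra.
  - assert (E : a i ^ 2 + a j ^ 2 <= nsq n a).
    { rewrite <- (rsum_ind n i (fun l => a l ^ 2)) by auto.
      rewrite <- (rsum_ind n j (fun l => a l ^ 2)) by auto.
      rewrite <- rsum_plus. apply rsum_le. intros z _. pose proof (pow2_ge_0 (a z)).
      destruct (Nat.eqb_spec z i), (Nat.eqb_spec z j); subst; try lia; lra. }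
    assert (0 <= (a i + a j) ^ 2) by apply pow2_ge_0. nra.
Qed.

Lemma gsum_elem_le {T} (l : list T) f y : (forall x, In x l -> 0 <= f x) -> In y l -> f y <= gsum l f.
Proof.
  induction l as [|x l IH]; intros H Hy; [destruct Hy|]. rewrite gsum_cons.
  destruct Hy as [<-|Hy].
  - assert (0 <= gsum l f) by (apply gsum_nonneg; intros; apply H; right; auto). lra.
  - assert (0 <= f x) by (apply H; left; auto). assert (f y <= gsum l f) by (apply IH; auto; intros; apply H; right; auto). lra.
Qed.

Lemma onestep n th (l : list nat) (a : nat -> R) (al : R) :
  NoDup l -> l <> nil -> (forall i, In i l -> (i < n)%nat) -> 0 <= al ->
  gsum l (fun y => luce_p th y l * exp (al * nsq n (fun i => a i + Xv th l y i)))
   <= exp (2 * al) * exp ((al + al ^ 2) * nsq n a).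
Proof.
  intros Hnd Hne Hin Hal.
  set (p := fun y => luce_p th y l).
  set (abar := gsum l (fun v => p v * a v)).
  assert (Hp1 : gsum l p = 1) by (apply luce_sum; auto).
  assert (Hp0 : forall y, 0 <= p y) by (intros; apply luce_nonneg).
  assert (Hple : forall y, In y l -> p y <= 1).
  { intros y Hy. rewrite <- Hp1. apply gsum_elem_le; auto. }
  assert (Hnsq : forall y, In y l -> nsq n (fun i => a i + Xv th l y i) <= nsq n a + 2 * (a y - abar) + 2).
  { intros y Hy.
    assert (Hyn : (y < n)%nat) by auto.
    unfold nsq.
    rewrite (rsum_ext n _ (fun i => a i ^ 2 + 2 * ((if Nat.eqb i y then a i else 0) - (if inS l i then p i * a i else 0))
              + ((if Nat.eqb i y then 1 - 2 * p i else 0) + (if inS l i then p i ^ 2 else 0)))).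
    2:{ intros i Hi. unfold Xv. fold (p i).
        destruct (Nat.eqb_spec i y) as [->|Hiy].
        - assert (inS l y = true) by (apply inS_iff; auto). rewrite H. ring.
        - destruct (inS l i); ring. }
    rewrite !rsum_plus, rsum_scal, rsum_minus, !rsum_ind by auto.
    rewrite !rsum_inS by auto.
    assert (gsum l (fun i => p i ^ 2) <= 1).
    { rewrite <- Hp1. apply gsum_le. intros i Hi. specialize (Hple i Hi). specialize (Hp0 i). nra. }
    specialize (Hp0 y). unfold abar. lra. }
  destruct (list_argmax l a Hne) as [imax [Himax Hmax]].
  destruct (list_argmin l a Hne) as [imin [Himin Hmin]].
  apply Rle_trans with (gsum l (fun y => exp (al * nsq n a + 2 * al) * (p y * exp (2 * al * (a y - abar))))).
  { apply gsum_le. intros y Hy. fold (p y).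
    replace (exp (al * nsq n a + 2 * al) * (p y * exp (2 * al * (a y - abar))))
      with (p y * exp (al * nsq n a + 2 * al + 2 * al * (a y - abar))) by (rewrite exp_plus; ring).
    apply Rmult_le_compat_l; auto. apply exp_le_m.
    specialize (Hnsq y Hy). nra. }
  rewrite gsum_scal.
  assert (Hh := hoeffding_list l p (fun y => a y - abar) (a imin - abar) (a imax - abar) (2 * al)).
  assert (Hh' : gsum l (fun y => p y * exp (2 * al * (a y - abar))) <= exp (al ^ 2 * nsq n a)).
  { eapply Rle_trans; [apply Hh|].
    - intros; auto.
    - auto.
    - rewrite (gsum_ext _ _ (fun y => p y * a y - abar * p y)) by (intros; ring).
      rewrite gsum_minus, gsum_scal, Hp1. unfold abar. ring.
    - intros y Hy. split; [specialize (Hmin y Hy)|specialize (Hmax y Hy)]; lra.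
    - lra.
    - apply exp_le_m.
      replace (a imax - abar - (a imin - abar)) with (a imax - a imin) by ring.
      pose proof (pair_bound n a imax imin (Hin _ Himax) (Hin _ Himin)).
      assert (0 <= al ^ 2) by apply pow2_ge_0.
      replace ((2 * al) ^ 2 * (a imax - a imin) ^ 2 / 8) with (al ^ 2 * ((a imax - a imin) ^ 2 / 2)) by field.
      apply Rmult_le_compat_l; auto. lra. }
  apply Rle_trans with (exp (al * nsq n a + 2 * al) * exp (al ^ 2 * nsq n a)).
  - apply Rmult_le_compat_l; [left; apply exp_pos| auto].
  - rewrite <- !exp_plus. apply exp_le_m. lra.
Qed.

Definition Gv (S : nat -> list nat) (th : nat -> R) (m : nat) (ys : list nat) (i : nat) : R :=
  rsum m (fun t => Xv th (S t) (obs ys t) i).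

Fixpoint Hs (m : nat) (al : R) : R :=
  match m with
  | O => 0
  | Datatypes.S m' => al + Hs m' (al + al ^ 2)
  end.

Lemma Gv_snoc S th m ys i j : length ys = m ->
  Gv S th (Datatypes.S m) (ys ++ [i]) j = Gv S th m ys j + Xv th (S m) i j.
Proof.
  intros Hl. unfold Gv. rewrite rsum_S. f_equal.
  - apply rsum_ext. intros t Ht. rewrite obs_snoc by lia. reflexivity.
  - rewrite <- Hl, obs_last. reflexivity.
Qed.

Lemma mgf n S th m :
  (forall t, (t < m)%nat -> NoDup (S t) /\ S t <> nil /\ (forall i, In i (S t) -> (i < n)%nat)) ->
  forall al, 0 <= al ->
  Ex S m th (fun ys => exp (al * nsq n (Gv S th m ys))) <= exp (2 * Hs m al).
Proof.
  induction m; intros HS al Hal.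
  - unfold Ex. simpl outcomes. rewrite gsum_cons, gsum_nil. unfold outcome_prob, rprod. simpl.
    unfold nsq, Gv. rewrite (rsum_ext n _ (fun _ => 0)) by (intros; rewrite rsum_O; ring).
    rewrite rsum_zero. rewrite Rmult_0_r, Rmult_0_r, exp_0. lra.
  - rewrite Ex_S. simpl Hs.
    destruct (HS m ltac:(lia)) as [Hnd [Hne Hin]].
    apply Rle_trans with (Ex S m th (fun ys => exp (2 * al) * exp ((al + al ^ 2) * nsq n (Gv S th m ys)))).
    + apply Ex_le. intros ys Hys. pose proof (outcomes_len S m ys Hys) as Hl.
      rewrite (gsum_ext _ _ (fun y => luce_p th y (S m) * exp (al * nsq n (fun i => Gv S th m ys i + Xv th (S m) y i)))).
      * apply onestep; auto.
      * intros y _. f_equal. f_equal. f_equal. unfold nsq. apply rsum_ext. intros j _. rewrite Gv_snoc; auto.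
    + rewrite Ex_scal. rewrite Rmult_plus_distr_l, exp_plus.
      apply Rmult_le_compat_l; [left; apply exp_pos|].
      apply IHm; [intros; apply HS; lia|]. pose proof (pow2_ge_0 al). lra.
Qed.

Lemma Hs_bound m : forall c al, 0 <= al <= / c -> INR m + 1 <= c -> Hs m al <= INR m / (c - INR m).
Proof.
  induction m; intros c al Hal Hc.
  - simpl. unfold Rdiv. rewrite Rmult_0_l. lra.
  - simpl Hs. rewrite S_INR in *.
    assert (Hc0 : 0 < c) by (pose proof (pos_INR m); lra).
    assert (Hc1 : 1 < c - 1 + 1) by (pose proof (pos_INR m); lra).
    assert (H1 : 0 <= al + al ^ 2 <= / (c - 1)).
    { split; [pose proof (pow2_ge_0 al); lra|].
      assert (al ^ 2 <= / c ^ 2).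
      { rewrite <- pow_inv. apply pow_incr. lra. }
      apply Rle_trans with (/ c + / c ^ 2); [lra|].
      apply Rmult_le_reg_r with (c ^ 2 * (c - 1)); [apply Rmult_lt_0_compat; [apply pow_lt|]; lra|].
      field_simplify; try lra; try nra. }
    specialize (IHm (c - 1) (al + al ^ 2) H1 ltac:(lra)).
    assert (al <= / (c - 1 - INR m)).
    { apply Rle_trans with (/ c); [lra|]. apply Rinv_le_contravar; pose proof (pos_INR m); lra. }
    replace ((INR m + 1) / (c - (INR m + 1))) with (/ (c - 1 - INR m) + INR m / (c - 1 - INR m))
      by (field; lra).
    replace (al * (al * 1)) with (al ^ 2) by ring. lra.
Qed.

Lemma cooc_sym S m i j : cooc S m i j = cooc S m j i.
Proof. unfold cooc. apply rsum_ext. intros t _. rewrite andb_comm. reflexivity. Qed.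

Lemma Mmat_sym S n m i j : Mmat S n m i j = Mmat S n m j i.
Proof. unfold Mmat. rewrite Nat.eqb_sym, cooc_sym. reflexivity. Qed.

Lemma lap_colsum S n m c : (c < n)%nat -> rsum n (fun r => laplacian n (Mmat S n m) r c) = 0.
Proof.
  intros Hc. unfold laplacian. rewrite rsum_minus.
  rewrite (rsum_ext n (fun r => if Nat.eqb r c then rsum n (fun l => Mmat S n m r l) else 0)
                     (fun r => if Nat.eqb r c then rsum n (fun l => Mmat S n m c l) else 0)).
  - rewrite (rsum_ind n c (fun _ => rsum n (fun l => Mmat S n m c l))) by auto.
    rewrite (rsum_ext n (fun r => Mmat S n m r c) (fun r => Mmat S n m c r)) by (intros; apply Mmat_sym).
    ring.
  - intros r _. destruct (Nat.eqb_spec r c); subst; reflexivity.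
Qed.

Lemma Qf_rsum n l x : NoDup l -> (forall i, In i l -> (i < n)%nat) ->
  Qf l x = / 2 * rsum n (fun i => rsum n (fun j => if (inS l i && inS l j)%bool then (x i - x j) ^ 2 else 0)).
Proof.
  intros Hnd Hin. unfold Qf. f_equal.
  rewrite <- (rsum_inS n l (fun i => gsum l (fun j => (x i - x j) ^ 2))) by auto.
  apply rsum_ext. intros i _. destruct (inS l i); simpl.
  - rewrite <- (rsum_inS n) by auto. reflexivity.
  - symmetry. apply rsum_zero.
Qed.

Lemma quad_lap S n m x : 0 < INR m -> 0 < INR n ->
  (forall t, (t < m)%nat -> NoDup (S t) /\ (forall i, In i (S t) -> (i < n)%nat)) ->
  quad n (laplacian n (Mmat S n m)) x = INR n / INR m * rsum m (fun t => Qf (S t) x).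
Proof.
  intros Hm Hn HS. set (M := Mmat S n m).
  assert (E1 : quad n (laplacian n M) x = rsum n (fun r => rsum n (fun c => M r c * (x r ^ 2 - x r * x c)))).
  { unfold quad. apply rsum_ext. intros r Hr. unfold laplacian.
    rewrite (rsum_ext n _ (fun c => (if Nat.eqb c r then rsum n (fun l => M r l) * x c else 0) - M r c * x c)).
    2:{ intros c _. rewrite Nat.eqb_sym. destruct (Nat.eqb_spec c r); ring. }
    rewrite rsum_minus, rsum_ind by auto.
    rewrite (rsum_ext n (fun c => M r c * (x r ^ 2 - x r * x c)) (fun c => x r ^ 2 * M r c - x r * (M r c * x c))) by (intros; ring).
    rewrite rsum_minus, rsum_scal, rsum_scal. change (rsum n (M r)) with (rsum n (fun l => M r l)). ring. }
  assert (E2 : rsum m (fun t => Qf (S t) x) = / 2 * rsum n (fun r => rsum n (fun c => cooc S m r c * (x r - x c) ^ 2))).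
  { rewrite (rsum_ext m _ (fun t => / 2 * rsum n (fun i => rsum n (fun j => if (inS (S t) i && inS (S t) j)%bool then (x i - x j) ^ 2 else 0)))).
    2:{ intros t Ht. destruct (HS t Ht). apply Qf_rsum; auto. }
    rewrite rsum_scal. f_equal. rewrite rsum_swap. apply rsum_ext. intros r _.
    rewrite rsum_swap. apply rsum_ext. intros c _. unfold cooc. rewrite <- rsum_scalr.
    apply rsum_ext. intros t _. unfold inS. destruct (existsb (Nat.eqb r) (S t) && existsb (Nat.eqb c) (S t))%bool; ring. }
  assert (E3 : rsum n (fun r => rsum n (fun c => M r c * x c ^ 2)) = rsum n (fun r => rsum n (fun c => M r c * x r ^ 2))).
  { rewrite rsum_swap. apply rsum_ext. intros r _. apply rsum_ext. intros c _. unfold M. rewrite Mmat_sym. reflexivity. }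
  assert (EL : rsum n (fun r => rsum n (fun c => M r c * (x r ^ 2 - x r * x c))) =
     rsum n (fun r => rsum n (fun c => M r c * x r ^ 2)) - rsum n (fun r => rsum n (fun c => M r c * x r * x c))).
  { rewrite <- rsum_minus. apply rsum_ext. intros r _. rewrite <- rsum_minus. apply rsum_ext. intros; ring. }
  set (A := rsum n (fun r => rsum n (fun c => M r c * x r ^ 2))) in *.
  set (C := rsum n (fun r => rsum n (fun c => M r c * x r * x c))) in *.
  assert (EQ : rsum n (fun r => rsum n (fun c => M r c * (x r - x c) ^ 2)) = A + A - 2 * C).
  { rewrite (rsum_ext n (fun r => rsum n (fun c => M r c * (x r - x c) ^ 2))
      (fun r => rsum n (fun c => M r c * x r ^ 2) + rsum n (fun c => M r c * x c ^ 2) - 2 * rsum n (fun c => M r c * x r * x c))).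
    - rewrite rsum_minus, rsum_plus, rsum_scal, E3. reflexivity.
    - intros r _. rewrite (rsum_ext n (fun c => M r c * (x r - x c) ^ 2)
         (fun c => M r c * x r ^ 2 + M r c * x c ^ 2 - 2 * (M r c * x r * x c))) by (intros; ring).
      rewrite rsum_minus, rsum_plus, rsum_scal. reflexivity. }
  assert (EC : rsum n (fun r => rsum n (fun c => cooc S m r c * (x r - x c) ^ 2)) =
      INR m / INR n * rsum n (fun r => rsum n (fun c => M r c * (x r - x c) ^ 2))).
  { rewrite (rsum_ext n (fun r => rsum n (fun c => cooc S m r c * (x r - x c) ^ 2))
       (fun r => INR m / INR n * rsum n (fun c => M r c * (x r - x c) ^ 2))); [apply rsum_scal|].
    intros r _.
    rewrite (rsum_ext n (fun c => cooc S m r c * (x r - x c) ^ 2)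
       (fun c => INR m / INR n * (M r c * (x r - x c) ^ 2))); [apply rsum_scal|].
    intros c _. unfold M, Mmat. destruct (Nat.eqb_spec r c) as [->|Hne]; [ring|]. field. split; lra. }
  rewrite E1, E2, EC, EQ, EL. field. split; lra.
Qed.

Lemma ln_luce th y l : l <> nil -> ln (luce_p th y l) = th y - ln (lsum l (fun v => exp (th v))).
Proof.
  intros H. unfold luce_p. rewrite ln_div, ln_exp; auto. apply exp_pos. apply lsum_exp_pos; auto.
Qed.

Lemma per_t (l : list nat) (ts th : nat -> R) (b : R) (k : nat) y :
  l <> nil -> length l = k ->
  (forall v, In v l -> - b <= ts v <= b /\ - b <= th v <= b) ->
  ln (luce_p th y l) - ln (luce_p ts y l) <=
  (th y - ts y) - gsum l (fun v => luce_p ts v l * (th v - ts v))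
   - exp (- (4 * b)) / INR k ^ 2 * Qf l (fun v => th v - ts v) / 2.
Proof.
  intros Hne Hlen Hbox.
  pose proof (lse_strong l ts (fun v => th v - ts v) b k Hne Hlen) as H. cbv beta in H.
  rewrite (gsum_ext l (fun v => exp (ts v + (th v - ts v))) (fun v => exp (th v))) in H
    by (intros; f_equal; ring).
  rewrite !ln_luce by auto. change (lsum l (fun v => exp (ts v))) with (gsum l (fun v => exp (ts v))). change (lsum l (fun v => exp (th v))) with (gsum l (fun v => exp (th v))).
  assert (E : gsum l (fun v => luce_p ts v l * (th v - ts v)) =
              gsum l (fun v => exp (ts v) * (th v - ts v)) / gsum l (fun v => exp (ts v))).
  { unfold Rdiv. rewrite <- gsum_scalr. apply gsum_ext. intros v _. unfold luce_p. rewrite lsum_gsum. unfold Rdiv. ring. }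
  rewrite E.
  enough (ln (gsum l (fun v => exp (ts v))) +
    gsum l (fun v => exp (ts v) * (th v - ts v)) / gsum l (fun v => exp (ts v)) +
    exp (- (4 * b)) / INR k ^ 2 * Qf l (fun v => th v - ts v) / 2 <= ln (gsum l (fun v => exp (th v)))) by (idtac; lra).
  apply H. intros v Hv. destruct (Hbox v Hv). split; [lra|]. replace (ts v + (th v - ts v)) with (th v) by ring. auto.
Qed.

Lemma inner_G S m th ys n (D : nat -> R) :
  (forall t, (t < m)%nat -> NoDup (S t) /\ (forall i, In i (S t) -> (i < n)%nat)) ->
  In ys (outcomes S m) ->
  rsum m (fun t => D (obs ys t) - gsum (S t) (fun v => luce_p th v (S t) * D v)) =
  rsum n (fun i => Gv S th m ys i * D i).
Proof.
  intros HS Hys. unfold Gv.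
  rewrite (rsum_ext n (fun i => rsum m (fun t => Xv th (S t) (obs ys t) i) * D i)
    (fun i => rsum m (fun t => Xv th (S t) (obs ys t) i * D i))) by (intros; apply eq_sym, rsum_scalr).
  rewrite rsum_swap. apply rsum_ext. intros t Ht.
  destruct (HS t Ht) as [Hnd Hin].
  pose proof (outcomes_in S m ys t Hys Ht) as Hy.
  unfold Xv.
  rewrite (rsum_ext n _ (fun i => (if Nat.eqb i (obs ys t) then D i else 0) - (if inS (S t) i then luce_p th i (S t) * D i else 0)))
    by (intros; destruct (Nat.eqb i (obs ys t)), (inS (S t) i); ring).
  rewrite rsum_minus, rsum_ind, rsum_inS; auto.
Qed.

Lemma det n m k b ts S th l2 ys :
  in_Theta n b ts -> in_Theta n b th -> (2 <= k)%nat ->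
  (forall t, (t < m)%nat -> NoDup (S t) /\ length (S t) = k /\ (forall i, In i (S t) -> (i < n)%nat)) ->
  is_lambda2 n (laplacian n (Mmat S n m)) l2 -> 0 < l2 -> (0 < m)%nat ->
  In ys (outcomes S m) -> loglik S m ys ts <= loglik S m ys th ->
  MSE n th ts <= (4 * INR k ^ 2 * exp (4 * b)) ^ 2 * INR n * nsq n (Gv S ts m ys) / (4 * INR m ^ 2 * l2 ^ 2).
Proof.
  intros [Bts Sts] [Bth Sth] Hk HS Hl2 Hpos Hm Hys Hll.
  assert (Hn2 : (2 <= n)%nat) by (destruct Hl2; auto).
  assert (HnR : 0 < INR n) by (apply lt_0_INR; lia).
  assert (HmR : 0 < INR m) by (apply lt_0_INR; lia).
  assert (HkR : 0 < INR k) by (apply lt_0_INR; lia).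
  set (D := fun v => th v - ts v).
  set (ga := exp (- (4 * b)) / INR k ^ 2).
  assert (Hga : 0 < ga) by (unfold ga; apply Rdiv_lt_0_compat; [apply exp_pos| apply pow_lt; auto]).
  assert (HS' : forall t, (t < m)%nat -> NoDup (S t) /\ (forall i, In i (S t) -> (i < n)%nat))
    by (intros t Ht; destruct (HS t Ht) as [? [? ?]]; auto).
  assert (HA : loglik S m ys th - loglik S m ys ts <=
     rsum m (fun t => (D (obs ys t) - gsum (S t) (fun v => luce_p ts v (S t) * D v)) - ga / 2 * Qf (S t) D)).
  { unfold loglik. rewrite <- rsum_minus. apply rsum_le. intros t Ht.
    destruct (HS t Ht) as [Hnd [Hlen Hin]].
    assert (Hne : S t <> nil) by (intros E; rewrite E in Hlen; simpl in Hlen; lia).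
    eapply Rle_trans; [apply (per_t (S t) ts th b k (obs ys t) Hne Hlen)|].
    - intros v Hv. specialize (Hin v Hv). split; auto.
    - unfold D, ga. right. unfold Rdiv. ring. }
  rewrite rsum_minus, (inner_G S m ts ys n D) in HA by auto.
  rewrite rsum_scal in HA.
  assert (HQ : rsum m (fun t => Qf (S t) D) = INR m / INR n * quad n (laplacian n (Mmat S n m)) D).
  { rewrite (quad_lap S n m D HmR HnR HS'). field. split; lra. }
  assert (Hsp : l2 * nsq n D <= quad n (laplacian n (Mmat S n m)) D).
  { apply spectral; auto.
    - intros c Hc. apply lap_colsum; auto.
    - unfold D. rewrite rsum_minus, Sth, Sts. ring. }
  set (G2 := nsq n (Gv S ts m ys)) in *.
  set (P := rsum n (fun i => Gv S ts m ys i * D i)) in *.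
  set (N := nsq n D) in *.
  set (Aa := ga * INR m * l2 / (2 * INR n)).
  assert (HAa : 0 < Aa) by (unfold Aa; apply Rdiv_lt_0_compat; [apply Rmult_lt_0_compat; [apply Rmult_lt_0_compat|]; auto| lra]).
  assert (HN0 : 0 <= N) by apply nsq_nonneg.
  assert (H1 : Aa * N <= P).
  { assert (0 <= loglik S m ys th - loglik S m ys ts) by lra.
    rewrite HQ in HA.
    assert (ga / 2 * (INR m / INR n * (l2 * N)) <= ga / 2 * (INR m / INR n * quad n (laplacian n (Mmat S n m)) D)).
    { apply Rmult_le_compat_l; [lra|]. apply Rmult_le_compat_l; [apply Rdiv_le_0_compat; lra| auto]. }
    replace (Aa * N) with (ga / 2 * (INR m / INR n * (l2 * N))) by (unfold Aa; field; lra).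
    lra. }
  assert (H2 : 0 <= G2 - 2 * Aa * P + Aa ^ 2 * N).
  { replace (G2 - 2 * Aa * P + Aa ^ 2 * N) with (rsum n (fun i => (Gv S ts m ys i - Aa * D i) ^ 2)).
    - apply rsum_nonneg. intros; apply pow2_ge_0.
    - unfold G2, P, N, nsq.
      rewrite (rsum_ext n (fun i => (Gv S ts m ys i - Aa * D i) ^ 2)
        (fun i => Gv S ts m ys i ^ 2 - 2 * Aa * (Gv S ts m ys i * D i) + Aa ^ 2 * D i ^ 2)) by (intros; ring).
      rewrite rsum_plus, rsum_minus, !rsum_scal. ring. }
  assert (H3 : Aa ^ 2 * N <= G2).
  { assert (Aa * (Aa * N) <= Aa * P) by (apply Rmult_le_compat_l; lra). simpl in *. lra. }
  unfold MSE. change (rsum n (fun i => (th i - ts i) ^ 2)) with N.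
  assert (E4 : exp (- (4 * b)) * exp (4 * b) = 1) by (rewrite <- exp_plus; replace (- (4 * b) + 4 * b) with 0 by ring; apply exp_0).
  assert (HE : 0 < exp (4 * b)) by apply exp_pos.
  replace ((4 * INR k ^ 2 * exp (4 * b)) ^ 2 * INR n * G2 / (4 * INR m ^ 2 * l2 ^ 2)) with (/ INR n * (G2 / Aa ^ 2)).
  - apply Rmult_le_compat_l; [left; apply Rinv_0_lt_compat; auto|].
    apply Rmult_le_reg_r with (Aa ^ 2); [apply pow_lt; auto|].
    unfold Rdiv. rewrite Rmult_assoc, Rinv_l, Rmult_1_r by (apply pow_nonzero; lra). lra.
  - unfold Aa, ga. replace (exp (- (4 * b))) with (/ exp (4 * b)) by (field_simplify_eq; [lra| lra]).
    field. repeat split; lra.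
Qed.

Lemma m_pos n m S l2 : is_lambda2 n (laplacian n (Mmat S n m)) l2 -> 0 < l2 -> (0 < m)%nat.
Proof.
  intros [Hn [mu [V [Horth [Heig [Hmono Hl2]]]]]] Hpos.
  destruct m; [|lia]. exfalso.
  assert (HL : forall r c, laplacian n (Mmat S n 0) r c = 0).
  { assert (HM : forall r c, Mmat S n 0 r c = 0).
    { intros r c. unfold Mmat, cooc. rewrite rsum_O. destruct (Nat.eqb r c); ring. }
    intros r c. unfold laplacian.
    rewrite (rsum_ext n (fun l => Mmat S n 0 r l) (fun _ => 0)) by (intros; apply HM).
    rewrite rsum_zero, HM. destruct (Nat.eqb r c); ring. }
  assert (H1 : forall r, (r < n)%nat -> mu 1%nat * V 1%nat r = 0).
  { intros r Hr. rewrite <- Heig by lia. rewrite (rsum_ext n _ (fun _ => 0)); [apply rsum_zero|].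
    intros c _. rewrite HL. ring. }
  specialize (Horth 1%nat 1%nat ltac:(lia) ltac:(lia)). simpl in Horth.
  assert (mu 1%nat = 0).
  { rewrite <- (Rmult_1_r (mu 1%nat)), <- Horth, <- rsum_scal.
    rewrite (rsum_ext n _ (fun _ => 0)); [apply rsum_zero|].
    intros r Hr. rewrite <- Rmult_assoc, H1 by auto. ring. }
  lra.
Qed.

Theorem theorem2
  (n m k : nat) (b : R) (theta_star : nat -> R) (S : nat -> list nat)
  (thetahat : list nat -> nat -> R) (l2 : R) :
  in_Theta n b theta_star ->
  (2 <= k)%nat ->
  (forall t, (t < m)%nat ->
     NoDup (S t) /\ length (S t) = k /\ (forall i, In i (S t) -> (i < n)%nat)) ->
  is_lambda2 n (laplacian n (Mmat S n m)) l2 ->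
  0 < l2 ->
  (forall ys, In ys (outcomes S m) ->
     in_Theta n b (thetahat ys) /\
     (forall theta, in_Theta n b theta ->
        loglik S m ys theta <= loglik S m ys (thetahat ys))) ->
  Prob S m theta_star
    (fun ys =>
       MSE n (thetahat ys) theta_star <=
       (4 * INR k ^ 2 * exp (4 * b)) ^ 2
         * (INR n * (ln (INR n) + 2) / l2 ^ 2) * / INR m)
  >= 1 - 2 / INR n.
Proof.
  intros Hts Hk HS Hl2 Hpos Hmax.
  assert (Hn2 : (2 <= n)%nat) by (destruct Hl2; auto).
  assert (Hm : (0 < m)%nat) by (eapply m_pos; eauto).
  assert (HnR : 0 < INR n) by (apply lt_0_INR; lia).
  assert (HmR1 : 1 <= INR m) by (replace 1 with (INR 1) by reflexivity; apply le_INR; lia).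
  assert (Hln : 0 < ln (INR n) + 2).
  { assert (0 <= ln (INR n)). { rewrite <- ln_1. apply ln_le; [lra|]. replace 1 with (INR 1) by reflexivity. apply le_INR; lia. } lra. }
  set (T := 4 * INR m * (ln (INR n) + 2)).
  set (al := / (4 * INR m)).
  assert (Hal : 0 < al) by (unfold al; apply Rinv_0_lt_compat; lra).
  set (E := fun ys : list nat => MSE n (thetahat ys) theta_star <=
       (4 * INR k ^ 2 * exp (4 * b)) ^ 2 * (INR n * (ln (INR n) + 2) / l2 ^ 2) * / INR m).
  set (g := fun ys => nsq n (Gv S theta_star m ys)).
  assert (Hpt : forall ys, In ys (outcomes S m) -> 1 - exp (- (al * T)) * exp (al * g ys) <= ind (E ys)).
  { intros ys Hys. unfold ind. destruct (excluded_middle_informative (E ys)) as [HE|HE].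
    - pose proof (exp_pos (- (al * T))). pose proof (exp_pos (al * g ys)).
      assert (0 < exp (- (al * T)) * exp (al * g ys)) by (apply Rmult_lt_0_compat; auto). lra.
    - destruct (Rle_dec (g ys) T) as [HgT|HgT].
      + exfalso. apply HE. unfold E.
        destruct (Hmax ys Hys) as [Hth Hopt].
        pose proof (det n m k b theta_star S (thetahat ys) l2 ys Hts Hth Hk HS Hl2 Hpos Hm Hys (Hopt _ Hts)) as Hd.
        fold (g ys) in Hd.
        eapply Rle_trans; [exact Hd|].
        assert (HC : 0 <= (4 * INR k ^ 2 * exp (4 * b)) ^ 2 * INR n) by (apply Rmult_le_pos; [apply pow2_ge_0| lra]).
        assert (Hl2s : 0 < 4 * INR m ^ 2 * l2 ^ 2) by (apply Rmult_lt_0_compat; [apply Rmult_lt_0_compat; [lra| apply pow_lt; lra]| apply pow_lt; lra]).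
        apply Rle_trans with ((4 * INR k ^ 2 * exp (4 * b)) ^ 2 * INR n * T / (4 * INR m ^ 2 * l2 ^ 2)).
        * unfold Rdiv. apply Rmult_le_compat_r; [left; apply Rinv_0_lt_compat; auto|].
          apply Rmult_le_compat_l; auto.
        * right. unfold T. field. split; lra.
      + assert (1 < exp (- (al * T)) * exp (al * g ys)).
        { rewrite <- exp_plus. rewrite <- exp_0. apply exp_increasing. apply Rnot_le_lt in HgT. nra. }
        lra. }
  rewrite Prob_Ex. fold E.
  apply Rle_ge.
  apply Rle_trans with (Ex S m theta_star (fun ys => 1 - exp (- (al * T)) * exp (al * g ys))).
  2:{ apply Ex_le. auto. }
  rewrite Ex_minus, Ex_scal, Ex_one.
  2:{ intros t Ht. destruct (HS t Ht) as [_ [Hlen _]]. intros E0. rewrite E0 in Hlen. simpl in Hlen. lia. }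
  assert (HM : Ex S m theta_star (fun ys => exp (al * g ys)) <= exp (2 / 3)).
  { eapply Rle_trans.
    - apply mgf; [|lra]. intros t Ht. destruct (HS t Ht) as [Hnd [Hlen Hin]]. repeat split; auto.
      intros E0. rewrite E0 in Hlen. simpl in Hlen. lia.
    - apply exp_le_m.
      assert (Hb := Hs_bound m (4 * INR m) al ltac:(split; [lra| unfold al; right; reflexivity]) ltac:(lra)).
      replace (INR m / (4 * INR m - INR m)) with (1 / 3) in Hb by (field; lra). lra. }
  assert (HaT : al * T = ln (INR n) + 2) by (unfold al, T; field; lra).
  rewrite HaT.
  assert (Hx : exp (- (ln (INR n) + 2)) * exp (2 / 3) <= 1 / INR n).
  { rewrite <- exp_plus. replace (- (ln (INR n) + 2) + 2 / 3) with (- ln (INR n) + - (4 / 3)) by field.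
    rewrite exp_plus, exp_Ropp, exp_ln by auto.
    assert (exp (- (4 / 3)) <= 1) by (rewrite <- exp_0; apply exp_le_m; lra).
    unfold Rdiv. rewrite Rmult_1_l. pose proof (Rinv_0_lt_compat _ HnR). nra. }
  assert (0 <= exp (- (ln (INR n) + 2))) by (left; apply exp_pos).
  assert (exp (- (ln (INR n) + 2)) * Ex S m theta_star (fun ys => exp (al * g ys)) <= exp (- (ln (INR n) + 2)) * exp (2 / 3))
    by (apply Rmult_le_compat_l; auto).
  assert (1 / INR n <= 2 / INR n) by (unfold Rdiv; apply Rmult_le_compat_r; [left; apply Rinv_0_lt_compat|]; lra).
  lra.
Qed.
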